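(* Let $a,\omega\in\mathbb{R}$ and on $T^*\mathbb{R}^2$ with coordinates ordered as $(p_x,p_y,x,y)$ consider \[H_{\mathrm{SK}}=\tfrac12(p_x^2+p_y^2)+\tfrac{\omega}{2}(x^2+y^2)+axy^2+\tfrac a3x^3,\qquad F_{\mathrm{SK}}=p_xp_y+\omega xy+ax^2y+\tfrac a3y^3.\] Let $X$ be the vector field with components $X^{p_x}=-\frac{xp_x+yp_y}{\sqrt2}$, $X^{p_y}=-\frac{yp_x+xp_y}{\sqrt2}$, $X^x=X^y=0$, let $P_1=\mathcal L_XP_0=-(J_XP_0+P_0J_X^{\top})$ ($J_X$ the Jacobian matrix of $X$), $N=P_1P_0^{-1}$ and $N^*=P_0^{-1}P_1$. Then, with covectors written as column vectors of partial derivatives in the order $(p_x,p_y,x,y)$, \[N^*dH_{\mathrm{SK}}=\tfrac{x}{\sqrt2}\,dH_{\mathrm{SK}}+\tfrac{y}{\sqrt2}\,dF_{\mathrm{SK}},\qquad N^*dF_{\mathrm{SK}}=\tfrac{y}{\sqrt2}\,dH_{\mathrm{SK}}+\tfrac{x}{\sqrt2}\,dF_{\mathrm{SK}},\] so that the control matrix has eigenvalues $u_1=\frac{x+y}{\sqrt2}$, $u_2=\frac{x-y}{\sqrt2}$. Moreover, with $v_1=\frac{p_x+p_y}{\sqrt2}$, $v_2=\frac{p_x-p_y}{\sqrt2}$, one has $p_x\,dx+p_y\,dy=v_1\,du_1+v_2\,du_2$ and \[H_{\mathrm{SK}}=H_1+H_2,\qquad F_{\mathrm{SK}}=H_1-H_2,\qquad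 H_i=\tfrac12v_i^2+\tfrac{\omega}{2}u_i^2+\tfrac{\sqrt2\,a}{3}u_i^3\ (i=1,2),\] so that the Hamilton equations of $H_{\mathrm{SK}}$ split into the two decoupled systems $\ddot u_i+\omega u_i+\sqrt2\,a\,u_i^2=0$, $i=1,2$.
   Context: $P_0$ is the canonical Poisson tensor on $T^*\mathbb{R}^2$, which in the ordering $(p_x,p_y,x,y)$ is the matrix $\begin{pmatrix}0&-I_2\\ I_2&0\end{pmatrix}$, corresponding to the bracket with $\{x,p_x\}_0=\{y,p_y\}_0=1$. *)

(* Defs.v *)
From HB Require Import structures.
From mathcomp Require Import all_boot all_order all_algebra.
From mathcomp Require Import all_classical all_reals all_analysis.
Set Implicit Arguments. Unset Strict Implicit. Unset Printing Implicit Defensive.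
Import Order.TTheory GRing.Theory Num.Theory.
Import numFieldNormedType.Exports.
Local Open Scope ring_scope.

Section Defs.
Variable R : realType.

Definition ipx : 'I_4 := inord 0.
Definition ipy : 'I_4 := inord 1.
Definition ix  : 'I_4 := inord 2.
Definition iy  : 'I_4 := inord 3.

Definition cpx (z : 'cV[R]_4) : R := z ipx 0.
Definition cpy (z : 'cV[R]_4) : R := z ipy 0.
Definition cx  (z : 'cV[R]_4) : R := z ix 0.
Definition cy  (z : 'cV[R]_4) : R := z iy 0.

Definition partial (f : 'cV[R]_4 -> R) (i : 'I_4) (z : 'cV[R]_4) : R :=
  derive1 (fun t : R => f (z + t *: delta_mx i 0)) 0.

Definition dif (f : 'cV[R]_4 -> R) (z : 'cV[R]_4) : 'cV[R]_4 :=
  \col_i partial f i z.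

Definition jacobian (X : 'cV[R]_4 -> 'cV[R]_4) (z : 'cV[R]_4) : 'M[R]_4 :=
  \matrix_(i, j) partial (fun w => X w i 0) j z.

Definition P0 : 'M[R]_4 :=
  block_mx (0 : 'M[R]_2) (- 1%:M) 1%:M 0.

Definition s2 : R := Num.sqrt 2.

Definition HSK (a w : R) (z : 'cV[R]_4) : R :=
  2^-1 * (cpx z ^+ 2 + cpy z ^+ 2) + w / 2 * (cx z ^+ 2 + cy z ^+ 2)
  + a * cx z * cy z ^+ 2 + a / 3 * cx z ^+ 3.

Definition FSK (a w : R) (z : 'cV[R]_4) : R :=
  cpx z * cpy z + w * cx z * cy z + a * cx z ^+ 2 * cy z + a / 3 * cy z ^+ 3.

Definition Xf (z : 'cV[R]_4) : 'cV[R]_4 :=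
  \col_i (if i == ipx then - ((cx z * cpx z + cy z * cpy z) / s2)
          else if i == ipy then - ((cy z * cpx z + cx z * cpy z) / s2)
          else 0).

Definition P1 (z : 'cV[R]_4) : 'M[R]_4 :=
  - (jacobian Xf z *m P0 + P0 *m (jacobian Xf z)^T).

Definition Nrec (z : 'cV[R]_4) : 'M[R]_4 := P1 z *m invmx P0.
Definition Nstar (z : 'cV[R]_4) : 'M[R]_4 := invmx P0 *m P1 z.

(* control matrix: N^* dH = c11 dH + c12 dF, N^* dF = c21 dH + c22 dF *)
Definition control_matrix (z : 'cV[R]_4) : 'M[R]_2 :=
  \matrix_(i, j) (if i == j then cx z / s2 else cy z / s2).

Definition u1 (z : 'cV[R]_4) : R := (cx z + cy z) / s2.
Definition u2 (z : 'cV[R]_4) : R := (cx z - cy z) / s2.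
Definition v1 (z : 'cV[R]_4) : R := (cpx z + cpy z) / s2.
Definition v2 (z : 'cV[R]_4) : R := (cpx z - cpy z) / s2.

Definition Hi (a w : R) (u v : R) : R :=
  2^-1 * v ^+ 2 + w / 2 * u ^+ 2 + s2 * a / 3 * u ^+ 3.

End Defs.
Arguments P0 {R}.
Arguments s2 {R}.

(* Main.v *)
Require Import Defs.
From HB Require Import structures.
From mathcomp Require Import all_boot all_order all_algebra.
From mathcomp Require Import all_classical all_reals all_analysis.
From mathcomp Require Import ring lra.
Import Order.TTheory GRing.Theory Num.Theory.
Import numFieldNormedType.Exports.
Local Open Scope ring_scope.

Section S.
Variable R : realType.

Implicit Types (f g : R -> R) (x c df dg : R).

Lemma DA f g x df dg : is_derive x 1 f df -> is_derive x 1 g dg ->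
  is_derive x 1 (fun t => f t + g t) (df + dg).
Proof. move=> ? ?; exact: is_deriveD. Qed.
Lemma DM f g x df dg : is_derive x 1 f df -> is_derive x 1 g dg ->
  is_derive x 1 (fun t => f t * g t) (f x * dg + g x * df).
Proof. move=> ? ?; exact: is_deriveM. Qed.
Lemma DN f x df : is_derive x 1 f df -> is_derive x 1 (fun t => - f t) (- df).
Proof. move=> ?; exact: is_deriveN. Qed.
Lemma DC x c : is_derive x 1 (fun _ : R => c) 0.
Proof. exact: is_derive_cst. Qed.
Lemma DI x : is_derive x 1 (fun t : R => t) 1.
Proof. exact: is_derive_id. Qed.

Lemma DX f x df n : is_derive x 1 f df ->
  is_derive x 1 (fun t => f t ^+ n) (n%:R * f x ^+ n.-1 * df).
Proof.
move=> H; elim: n => [|n IH].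
  apply: is_derive_eq; first exact: DC. by rewrite mul0r mul0r.
have -> : (fun t => f t ^+ n.+1) = (fun t => f t * f t ^+ n) by apply/funext=> t; rewrite exprS.
apply: is_derive_eq.
case: n IH => [|n] IH /=; first by rewrite /GRing.scale /=; ring.
rewrite !exprS -!natr1 /GRing.scale /=; ring.
Qed.
Lemma DCo (z : 'cV[R]_4) (i j : 'I_4) : is_derive (0:R) (1:R) (fun t : R => (z + t *: delta_mx i 0) j 0) ((delta_mx i 0 : 'cV[R]_4) j 0).
Proof.
have -> : (fun t : R => (z + t *: delta_mx i 0) j 0) = (fun t => z j 0 + t * (delta_mx i 0 : 'cV[R]_4) j 0).
  by apply/funext => t; rewrite !mxE.
apply: is_derive_eq.
rewrite /GRing.scale /=. field. ring.
Qed.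

Existing Instance DCo.
Local Notation e i k := ((delta_mx i 0 : 'cV[R]_4) k 0).

Lemma eqs : ((ipx == ipy) = false) * ((ipx == ix) = false) * ((ipx == iy) = false) *
   ((ipy == ipx) = false) * ((ipy == ix) = false) * ((ipy == iy) = false) *
   ((ix == ipx) = false) * ((ix == ipy) = false) * ((ix == iy) = false) *
   ((iy == ipx) = false) * ((iy == ipy) = false) * ((iy == ix) = false).
Proof. by rewrite /ipx /ipy /ix /iy; repeat split; rewrite -val_eqE /= !inordK. Qed.

Lemma ord4P (i : 'I_4) : [\/ i = ipx, i = ipy, i = ix | i = iy].
Proof.
case: i => [[|[|[|[|m]]]] Hi] //.
- by apply: Or41; apply: val_inj; rewrite /= inordK.
- by apply: Or42; apply: val_inj; rewrite /= inordK.
- by apply: Or43; apply: val_inj; rewrite /= inordK.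
- by apply: Or44; apply: val_inj; rewrite /= inordK.
Qed.

Lemma sum4 (F : 'I_4 -> R) : \sum_(j < 4) F j = F ipx + F ipy + F ix + F iy.
Proof.
rewrite !big_ord_recl big_ord0 addr0 !addrA.
congr (F _ + F _ + F _ + F _); apply: val_inj; by rewrite /= inordK.
Qed.

Lemma P0E : (P0 : 'M[R]_4) = \matrix_(i, j) (((i == ix) && (j == ipx) || (i == iy) && (j == ipy))%:R
   - ((i == ipx) && (j == ix) || (i == ipy) && (j == iy))%:R).
Proof.
have E0 : ipx = lshift 2 (ord0 : 'I_2) by apply: val_inj; rewrite /= inordK.
have E1 : ipy = lshift 2 (ord_max : 'I_2) by apply: val_inj; rewrite /= inordK.
have E2 : ix = rshift 2 (ord0 : 'I_2) by apply: val_inj; rewrite /= inordK.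
have E3 : iy = rshift 2 (ord_max : 'I_2) by apply: val_inj; rewrite /= inordK.
have sl (k : 'I_2) : fintype.split (lshift 2 k : 'I_(2+2)) = inl k := unsplitK (inl k).
have sr (k : 'I_2) : fintype.split (rshift 2 k : 'I_(2+2)) = inr k := unsplitK (inr k).
apply/matrixP => i j; rewrite mxE.
case: (ord4P i) => ->; case: (ord4P j) => ->; rewrite ?eqxx ?eqs /P0;
  rewrite ?E0 ?E1 ?E2 ?E3 !mxE ?sl ?sr !mxE ?sl ?sr /= ?mxE /=;
  rewrite ?subr0 ?sub0r ?subrr ?oppr0 //.
Qed.


Lemma invP0 : invmx (P0 : 'M[R]_4) = - P0.
Proof.
have H : (P0 : 'M[R]_4) *m (- P0) = 1%:M.
  apply/matrixP => i j; rewrite mulmxN P0E.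
  case: (ord4P i) => ->; case: (ord4P j) => ->;
  rewrite !mxE sum4 !mxE ?eqxx ?eqs /=; ring.
have [U _] := mulmx1_unit H.
by rewrite -[invmx P0]mulmx1 -H mulmxA mulVmx // mul1mx.
Qed.

Lemma s2_neq0 : (s2 : R) != 0.
Proof. by rewrite /s2 sqrtr_eq0 -ltNge ltr0n. Qed.

Lemma pX0 z (j : 'I_4) : partial (fun w : 'cV[R]_4 => Xf w ipx 0) j z =
  -((e j ix * cpx z + cx z * e j ipx + (e j iy * cpy z + cy z * e j ipy)) / s2).
Proof.
have -> : (fun w : 'cV[R]_4 => Xf w ipx 0) = fun w => -((cx w * cpx w + cy w * cpy w)/s2).
  by apply/funext => w; rewrite mxE eqxx.
rewrite /partial /cpx /cpy /cx /cy derive1E derive_val !scale0r !addr0 /GRing.scale /=.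
field; exact: s2_neq0.
Qed.

Lemma pX1 z (j : 'I_4) : partial (fun w : 'cV[R]_4 => Xf w ipy 0) j z =
  -((e j iy * cpx z + cy z * e j ipx + (e j ix * cpy z + cx z * e j ipy)) / s2).
Proof.
have -> : (fun w : 'cV[R]_4 => Xf w ipy 0) = fun w => -((cy w * cpx w + cx w * cpy w)/s2).
  by apply/funext => w; rewrite mxE eqxx eqs.
rewrite /partial /cpx /cpy /cx /cy derive1E derive_val !scale0r !addr0 /GRing.scale /=.
field; exact: s2_neq0.
Qed.

Lemma pXz z (i j : 'I_4) : i != ipx -> i != ipy -> partial (fun w : 'cV[R]_4 => Xf w i 0) j z = 0.
Proof.
move=> /negbTE h1 /negbTE h2.
have -> : (fun w : 'cV[R]_4 => Xf w i 0) = fun w : 'cV[R]_4 => (0:R) by apply/funext => w; rewrite mxE h1 h2.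
by rewrite /partial derive1E derive_val.
Qed.

Lemma mulE n (A : 'M[R]_4) (B : 'M[R]_(4, n)) i j :
  (A *m B) i j = A i ipx * B ipx j + A i ipy * B ipy j + A i ix * B ix j + A i iy * B iy j.
Proof. by rewrite mxE sum4. Qed.
Lemma addE m n (A B : 'M[R]_(m, n)) i j : (A + B) i j = A i j + B i j.
Proof. by rewrite mxE. Qed.
Lemma oppE m n (A : 'M[R]_(m, n)) i j : (- A) i j = - A i j.
Proof. by rewrite mxE. Qed.
Lemma trE m n (A : 'M[R]_(m, n)) i j : A^T i j = A j i.
Proof. by rewrite mxE. Qed.
Lemma jacE z i j : Defs.jacobian (@Xf R) z i j = partial (fun w : 'cV[R]_4 => Xf w i 0) j z.
Proof. by rewrite mxE. Qed.
Lemma P0e i j : (P0 : 'M[R]_4) i j = (((i == ix) && (j == ipx) || (i == iy) && (j == ipy))%:R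
   - ((i == ipx) && (j == ix) || (i == ipy) && (j == iy))%:R).
Proof. by rewrite P0E mxE. Qed.

Lemma NstarE z (v : 'cV[R]_4) : Nstar z *m v = \col_i
  (if i == ipx then (cx z * v ipx 0 + cy z * v ipy 0) / s2
   else if i == ipy then (cy z * v ipx 0 + cx z * v ipy 0) / s2
   else if i == ix then (cx z * v ix 0 + cy z * v iy 0) / s2
   else (cy z * v ix 0 + cx z * v iy 0) / s2).
Proof.
apply/matrixP => i k; rewrite ord1 /Nstar invP0 /P1 !(mulE, addE, oppE, trE) !jacE !P0e.
rewrite ?pX0 ?pX1 ?pXz ?eqxx ?eqs //.
rewrite mxE.
case: (ord4P i) => ->; rewrite ?eqxx ?eqs /= !mxE ?eqxx ?eqs /=.
all: field; exact: s2_neq0.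
Qed.



Lemma pH a w z i : partial (HSK a w) i z = cpx z * e i ipx + cpy z * e i ipy
  + (w * cx z + a * cy z ^+ 2 + a * cx z ^+ 2) * e i ix + (w * cy z + 2 * a * cx z * cy z) * e i iy.
Proof.
rewrite /partial /HSK /cpx /cpy /cx /cy derive1E.
rewrite derive_val !scale0r !addr0 /GRing.scale /=; by field.
Qed.

Lemma pF a w z i : partial (FSK a w) i z = cpy z * e i ipx + cpx z * e i ipy
  + (w * cy z + 2 * a * cx z * cy z) * e i ix + (w * cx z + a * cx z ^+ 2 + a * cy z ^+ 2) * e i iy.
Proof.
rewrite /partial /FSK /cpx /cpy /cx /cy derive1E.
rewrite derive_val !scale0r !addr0 /GRing.scale /=; by field.
Qed.

Lemma scaleE m n c (A : 'M[R]_(m, n)) i j : (c *: A) i j = c * A i j.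
Proof. by rewrite mxE. Qed.
Lemma difE (f : 'cV[R]_4 -> R) z i j : dif f z i j = partial f i z.
Proof. by rewrite mxE. Qed.

Lemma part1 (a w : R) (z : 'cV[R]_4) :
     Nstar z *m dif (HSK a w) z
       = (cx z / s2) *: dif (HSK a w) z + (cy z / s2) *: dif (FSK a w) z /\
     Nstar z *m dif (FSK a w) z
       = (cy z / s2) *: dif (HSK a w) z + (cx z / s2) *: dif (FSK a w) z.
Proof.
split; rewrite NstarE; apply/matrixP => i k; rewrite ord1 !(addE, scaleE) ?difE mxE ?difE !pH !pF;
  case: (ord4P i) => ->; rewrite ?eqxx ?eqs /= !mxE ?eqxx ?eqs /= /cpx /cpy /cx /cy;
  by field; rewrite ?s2_neq0.
Qed.


Lemma part2 (z : 'cV[R]_4) :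
  char_poly (control_matrix z) = ('X - (u1 z)%:P) * ('X - (u2 z)%:P).
Proof.
rewrite /char_poly (expand_det_row _ ord0) big_ord_recl big_ord1 /cofactor !det_mx11 !mxE /=.
have -> : u1 z = cx z / s2 + cy z / s2 by rewrite /u1 mulrDl.
have -> : u2 z = cx z / s2 - cy z / s2 by rewrite /u2 mulrBl.
rewrite /bump /= expr0 expr1 mulr1n mulr0n polyCD polyCB.
ring.
Qed.



Lemma s2sq : (s2 : R) ^+ 2 = 2.
Proof. by rewrite /s2 sqr_sqrtr // ler0n. Qed.

Lemma divs2M (a b : R) : a / s2 * (b / s2) = a * b / 2.
Proof. by rewrite mulf_div -expr2 s2sq. Qed.
Lemma sq2 (b : R) : (b / s2) ^+ 2 = b ^+ 2 / 2.
Proof. by rewrite expr_div_n s2sq. Qed.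
Lemma cu2 (b : R) : (b / s2) ^+ 3 = b ^+ 3 / (2 * s2).
Proof. by rewrite expr_div_n (exprS s2) s2sq (mulrC s2). Qed.

Lemma pcx (z : 'cV[R]_4) i : partial (@cx R) i z = e i ix.
Proof. by rewrite /partial /cx derive1E derive_val. Qed.
Lemma pcy (z : 'cV[R]_4) i : partial (@cy R) i z = e i iy.
Proof. by rewrite /partial /cy derive1E derive_val. Qed.
Lemma pu1 (z : 'cV[R]_4) i : partial (@u1 R) i z = (e i ix + e i iy) / s2.
Proof.
rewrite /partial /u1 /cx /cy derive1E derive_val !scale0r !addr0 /GRing.scale /=.
by field; rewrite ?s2_neq0.
Qed.
Lemma pu2 (z : 'cV[R]_4) i : partial (@u2 R) i z = (e i ix - e i iy) / s2.
Proof.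
rewrite /partial /u2 /cx /cy derive1E derive_val !scale0r !addr0 /GRing.scale /=.
by field; rewrite ?s2_neq0.
Qed.

Lemma part3 (z : 'cV[R]_4) :
     cpx z *: dif (@cx R) z + cpy z *: dif (@cy R) z
       = v1 z *: dif (@u1 R) z + v2 z *: dif (@u2 R) z.
Proof.
apply/matrixP => i k; rewrite ord1 !(addE, scaleE) ?difE pcx pcy pu1 pu2 /v1 /v2 !divs2M.
by field.
Qed.

Lemma part4 (a w : R) (z : 'cV[R]_4) :
     HSK a w z = Hi a w (u1 z) (v1 z) + Hi a w (u2 z) (v2 z) /\
     FSK a w z = Hi a w (u1 z) (v1 z) - Hi a w (u2 z) (v2 z).
Proof.
rewrite /HSK /FSK /Hi /u1 /u2 /v1 /v2 !sq2 !cu2.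
by split; field; rewrite ?s2_neq0.
Qed.

Lemma hamE (a w : R) (z : 'cV[R]_4) i : (P0 *m dif (HSK a w) z) i 0 =
  if i == ipx then -(w * cx z + a * cy z ^+ 2 + a * cx z ^+ 2)
  else if i == ipy then -(w * cy z + 2 * a * cx z * cy z)
  else if i == ix then cpx z else cpy z.
Proof.
rewrite mulE !P0e ?difE !pH.
by case: (ord4P i) => ->; rewrite ?eqxx ?eqs /= !mxE ?eqxx ?eqs /=; ring.
Qed.

Lemma d1_of (f : R -> R) (x df : R) : is_derive x (1:R) f df -> derive1 f x = df.
Proof. by move=> H; rewrite derive1E derive_val. Qed.

Lemma part5 (a w : R) (gamma : R -> 'cV[R]_4) :
     (forall (i : 'I_4) (t : R),
        derivable (fun s => gamma s i 0) t 1 /\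
        derive1 (fun s => gamma s i 0) t = (P0 *m dif (HSK a w) (gamma t)) i 0) ->
     forall t : R,
       let U1 := fun s => u1 (gamma s) in
       let U2 := fun s => u2 (gamma s) in
       (derivable U1 t 1 /\ derivable (derive1 U1) t 1 /\
        derive1 (derive1 U1) t + w * U1 t + s2 * a * U1 t ^+ 2 = 0) /\
       (derivable U2 t 1 /\ derivable (derive1 U2) t 1 /\
        derive1 (derive1 U2) t + w * U2 t + s2 * a * U2 t ^+ 2 = 0).
Proof.
move=> Hg t U1 U2.
have Dg (i : 'I_4) (s : R) : is_derive s 1 (fun r => gamma r i 0) ((P0 *m dif (HSK a w) (gamma s)) i 0).
  have [h1 h2] := Hg i s; rewrite -h2 derive1E; exact: derivableP.
have Dx (s : R) : is_derive s 1 (fun r => gamma r ix 0) (gamma s ipx 0).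
  by move: (Dg ix s); rewrite hamE ?eqxx ?eqs /= /cpx /cpy /cx /cy => H; exact: H.
have Dy (s : R) : is_derive s 1 (fun r => gamma r iy 0) (gamma s ipy 0).
  by move: (Dg iy s); rewrite hamE ?eqxx ?eqs /= /cpx /cpy /cx /cy => H; exact: H.
have Dpx (s : R) : is_derive s 1 (fun r => gamma r ipx 0)
   (-(w * gamma s ix 0 + a * gamma s iy 0 ^+ 2 + a * gamma s ix 0 ^+ 2)).
  by move: (Dg ipx s); rewrite hamE ?eqxx ?eqs /= /cpx /cpy /cx /cy => H; exact: H.
have Dpy (s : R) : is_derive s 1 (fun r => gamma r ipy 0)
   (-(w * gamma s iy 0 + 2 * a * gamma s ix 0 * gamma s iy 0)).
  by move: (Dg ipy s); rewrite hamE ?eqxx ?eqs /= /cpx /cpy /cx /cy => H; exact: H.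
have D1 (s : R) : is_derive s 1 U1 ((gamma s ipx 0 + gamma s ipy 0) / s2).
  rewrite /U1 /u1 /cx /cy.
  apply: is_derive_eq; rewrite /GRing.scale /=; ring.
have D2 (s : R) : is_derive s 1 U2 ((gamma s ipx 0 - gamma s ipy 0) / s2).
  rewrite /U2 /u2 /cx /cy.
  apply: is_derive_eq; rewrite /GRing.scale /=; ring.
have E1 : derive1 U1 = fun s => (gamma s ipx 0 + gamma s ipy 0) / s2.
  by apply/funext => s; apply: d1_of.
have E2 : derive1 U2 = fun s => (gamma s ipx 0 - gamma s ipy 0) / s2.
  by apply/funext => s; apply: d1_of.
have D1' : is_derive t 1 (fun s => (gamma s ipx 0 + gamma s ipy 0) / s2)
  ((-(w * gamma t ix 0 + a * gamma t iy 0 ^+ 2 + a * gamma t ix 0 ^+ 2)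
    - (w * gamma t iy 0 + 2 * a * gamma t ix 0 * gamma t iy 0)) / s2).
  apply: is_derive_eq; rewrite /GRing.scale /=; ring.
have D2' : is_derive t 1 (fun s => (gamma s ipx 0 - gamma s ipy 0) / s2)
  ((-(w * gamma t ix 0 + a * gamma t iy 0 ^+ 2 + a * gamma t ix 0 ^+ 2)
    + (w * gamma t iy 0 + 2 * a * gamma t ix 0 * gamma t iy 0)) / s2).
  apply: is_derive_eq; rewrite /GRing.scale /=; ring.
rewrite E1 E2; split; split.
- by case: (D1 t).
- split; first by case: D1'.
  rewrite (d1_of _ _ _ D1') /U1 /u1 /cx /cy; by field; rewrite ?s2_neq0.
- by case: (D2 t).
- split; first by case: D2'.
  rewrite (d1_of _ _ _ D2') /U2 /u2 /cx /cy; by field; rewrite ?s2_neq0.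
Qed.
End S.

Theorem mainTheorem4 (R : realType) (a w : R) :
  (* N^* dH = x/sqrt2 dH + y/sqrt2 dF,  N^* dF = y/sqrt2 dH + x/sqrt2 dF *)
  (forall z : 'cV[R]_4,
     Nstar z *m dif (HSK a w) z
       = (cx z / s2) *: dif (HSK a w) z + (cy z / s2) *: dif (FSK a w) z /\
     Nstar z *m dif (FSK a w) z
       = (cy z / s2) *: dif (HSK a w) z + (cx z / s2) *: dif (FSK a w) z) /\
  (* eigenvalues of the control matrix are u1, u2 *)
  (forall z : 'cV[R]_4,
     char_poly (control_matrix z) = ('X - (u1 z)%:P) * ('X - (u2 z)%:P)) /\
  (* p_x dx + p_y dy = v1 du1 + v2 du2 *)
  (forall z : 'cV[R]_4,
     cpx z *: dif (@cx R) z + cpy z *: dif (@cy R) z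
       = v1 z *: dif (@u1 R) z + v2 z *: dif (@u2 R) z) /\
  (* H = H1 + H2, F = H1 - H2 *)
  (forall z : 'cV[R]_4,
     HSK a w z = Hi a w (u1 z) (v1 z) + Hi a w (u2 z) (v2 z) /\
     FSK a w z = Hi a w (u1 z) (v1 z) - Hi a w (u2 z) (v2 z)) /\
  (* along any solution of Hamilton's equations dz/dt = P0 dH, the u_i
     satisfy  u_i'' + w u_i + sqrt2 a u_i^2 = 0 *)
  (forall gamma : R -> 'cV[R]_4,
     (forall (i : 'I_4) (t : R),
        derivable (fun s => gamma s i 0) t 1 /\
        derive1 (fun s => gamma s i 0) t = (P0 *m dif (HSK a w) (gamma t)) i 0) ->
     forall t : R,
       let U1 := fun s => u1 (gamma s) in
       let U2 := fun s => u2 (gamma s) in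
       (derivable U1 t 1 /\ derivable (derive1 U1) t 1 /\
        derive1 (derive1 U1) t + w * U1 t + s2 * a * U1 t ^+ 2 = 0) /\
       (derivable U2 t 1 /\ derivable (derive1 U2) t 1 /\
        derive1 (derive1 U2) t + w * U2 t + s2 * a * U2 t ^+ 2 = 0)).
Proof.
split; first by move=> z; exact: part1.
split; first by move=> z; exact: part2.
split; first by move=> z; exact: part3.
split; first by move=> z; exact: part4.
exact: part5.
Qed.
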